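(* For every $n\ge 3$, the Grothendieck constant of the circuit (cycle) $C_n$ of length $n$ is $\kappa(C_n)=\frac{n}{n-2}\cos\left(\frac{\pi}{n}\right)$.
   Context: For a graph $G=([n],E)$ and $w\in\mathbb{R}^E$, let $\mathrm{ip}(G,w)=\max_{x\in\{\pm1\}^n}\sum_{ij\in E}w_{ij}x_ix_j$ and $\mathrm{sdp}(G,w)=\max\sum_{ij\in E}w_{ij}u_i^Tu_j$, the maximum over unit vectors $u_1,\dots,u_n\in\mathbb{R}^n$. The Grothendieck constant of $G$ is $\kappa(G)=\sup_{w\in\mathbb{R}^E}\mathrm{sdp}(G,w)/\mathrm{ip}(G,w)$. *)

(* Defs.v *)
From HB Require Import structures.
From mathcomp Require Import all_boot all_order all_algebra.
From mathcomp Require Import all_classical all_reals all_analysis.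
Set Implicit Arguments. Unset Strict Implicit. Unset Printing Implicit Defensive.
Import Order.TTheory GRing.Theory Num.Theory.
Local Open Scope classical_set_scope.
Local Open Scope ring_scope.

(* A simple graph on vertex set [n] = 'I_n, given by a (symmetric, irreflexive)
   adjacency relation G.  The edge set E is {ij : i < j, G i j}.
   Edge weights w in R^E are represented by a function w : 'I_n -> 'I_n -> R,
   of which only the values w i j with i < j and G i j are used. *)

Definition edge_sum (R : realType) (n : nat) (G : rel 'I_n)
  (w : 'I_n -> 'I_n -> R) (f : 'I_n -> 'I_n -> R) : R :=
  \sum_(i < n) \sum_(j < n | (i < j)%N && G i j) w i j * f i j.

Definition ip (R : realType) (n : nat) (G : rel 'I_n) (w : 'I_n -> 'I_n -> R) : R :=
  sup [set v | exists x : 'I_n -> R,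
         (forall i, x i = 1 \/ x i = -1) /\ v = edge_sum G w (fun i j => x i * x j)].

Definition sdp (R : realType) (n : nat) (G : rel 'I_n) (w : 'I_n -> 'I_n -> R) : R :=
  sup [set v | exists u : 'I_n -> 'I_n -> R,
         (forall i, \sum_(k < n) u i k ^+ 2 = 1) /\
         v = edge_sum G w (fun i j => \sum_(k < n) u i k * u j k)].

(* kappa(G) = sup_w sdp(G,w)/ip(G,w), over the weights for which the ratio is
   defined (ip(G,w) > 0, i.e. w not identically 0 on E). *)
Definition grothendieck_const (R : realType) (n : nat) (G : rel 'I_n) : R :=
  sup [set r | exists w : 'I_n -> 'I_n -> R, 0 < ip G w /\ r = sdp G w / ip G w].

Definition cycle_graph (n : nat) : rel 'I_n :=
  fun i j => (val j == (val i).+1 %% n)%N || (val i == (val j).+1 %% n)%N.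

(* Main.v *)
Require Import Defs.
From HB Require Import structures.
From mathcomp Require Import all_boot all_order all_algebra.
From mathcomp Require Import all_classical all_reals all_analysis.
From mathcomp Require Import ring lra.
Import Order.TTheory GRing.Theory Num.Theory.
Local Open Scope ring_scope.
From mathcomp Require Import zify.
Definition th (R : realType) (m : nat) : R := pi / (m.+3)%:R.
Definition sg (R : realType) (m k : nat) : R := sin (k%:R * th R m).
Definition rh (R : realType) (m k : nat) : R := cos (k%:R * th R m).

Lemma thS (R : realType) m k : k.+1%:R * th R m = k%:R * th R m + th R m.
Proof. by rewrite -addn1 natrD mulrDl mul1r. Qed.

Lemma thN (R : realType) m : (m.+3)%:R * th R m = pi.
Proof. by rewrite /th mulrC -mulrA mulVf ?mulr1 // pnatr_eq0. Qed.

Lemma sg_rec (R : realType) m k :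
  sg R m k.+2 + sg R m k = 2 * cos (th R m) * sg R m k.+1.
Proof.
rewrite /sg thS.
have -> : k%:R * th R m = k.+1%:R * th R m - th R m by rewrite thS addrK.
rewrite sinD sinB; ring.
Qed.

Lemma sg_cross (R : realType) m k :
  rh R m k * sg R m k.+1 - rh R m k.+1 * sg R m k = sin (th R m).
Proof.
rewrite /sg /rh.
have e : k.+1%:R * th R m - k%:R * th R m = th R m by rewrite thS addrAC subrr add0r.
rewrite -[in RHS]e sinB; ring.
Qed.

Lemma sgN (R : realType) m : sg R m m.+3 = 0.
Proof. by rewrite /sg thN sinpi. Qed.

Lemma sgN1 (R : realType) m : sg R m m.+2 = sin (th R m).
Proof.
rewrite /sg.
have -> : m.+2%:R * th R m = pi - th R m by rewrite -(thN R m) (thS R m m.+2) addrK.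
by rewrite sinB sinpi cospi; ring.
Qed.

Lemma rhN1 (R : realType) m : rh R m m.+2 = - cos (th R m).
Proof.
rewrite /rh.
have -> : m.+2%:R * th R m = pi - th R m by rewrite -(thN R m) (thS R m m.+2) addrK.
by rewrite cosB sinpi cospi; ring.
Qed.

Lemma sg1 (R : realType) m : sg R m 1 = sin (th R m).
Proof. by rewrite /sg mul1r. Qed.

Lemma sg_gt0 (R : realType) m k : (0 < k < m.+3)%N -> 0 < sg R m k.
Proof.
case/andP=> k0 kN; apply: sin_gt0_pi; apply/andP; split.
  rewrite mulr_gt0 // ?ltr0n // /th divr_gt0 ?pi_gt0 // ltr0n //.
rewrite -[X in _ < X](thN R m) ltr_pM2r ?ltr_nat //.
rewrite /th divr_gt0 ?pi_gt0 // ltr0n //.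
Qed.

Definition TT (R : realType) m (x : nat -> R) k : R :=
  (sg R m k.+1 * x k - sg R m k * x k.+1 - sin (th R m) * x 0%N) ^+ 2
    / (2 * sg R m k * sg R m k.+1).

Lemma bnr (R : realType) (F : nat -> R) M :
  \sum_(1 <= k < M.+2) F k = \sum_(1 <= k < M.+1) F k + F M.+1.
Proof. by rewrite big_nat_recr. Qed.

Lemma bl0 (R : realType) (F : nat -> R) M :
  \sum_(0 <= k < M.+1) F k = F 0%N + \sum_(1 <= k < M.+1) F k.
Proof. by rewrite big_ltn. Qed.

Lemma inv_id (R : realType) m (x : nat -> R) M : (M < m.+2)%N ->
  \sum_(1 <= k < M.+1) TT R m x k =
  cos (th R m) * \sum_(1 <= k < M.+1) x k ^+ 2
  + sg R m M / (2 * sg R m M.+1) * x M.+1 ^+ 2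
  - \sum_(1 <= k < M.+1) x k * x k.+1 - x 0%N * x 1%N
  + sin (th R m) / sg R m M.+1 * x 0%N * x M.+1
  + (cos (th R m) / 2 - sin (th R m) * rh R m M.+1 / (2 * sg R m M.+1)) * x 0%N ^+ 2.
Proof.
elim: M => [_|M IH hM].
  rewrite !big_geq // sg1 /sg /rh mul0r sin0 mul1r.
  have hs : sin (th R m) != 0 by rewrite -sg1 gt_eqF // sg_gt0.
  by field.
have hM' : (M < m.+2)%N by apply: ltnW.
rewrite !(bnr _ _ M) (IH hM').
have h1 : sg R m M.+1 != 0 by rewrite gt_eqF // sg_gt0 //= ltnS ltnW.
have h2 : sg R m M.+2 != 0 by rewrite gt_eqF // sg_gt0.
have hr : sg R m M = 2 * cos (th R m) * sg R m M.+1 - sg R m M.+2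
  by rewrite -(sg_rec R m M); ring.
rewrite /TT hr -(sg_cross R m M.+1).
field; by rewrite h1 h2.
Qed.

Lemma scalar_ineq (R : realType) m (x : nat -> R) :
  \sum_(0 <= k < m.+2) x k * x k.+1 - x 0%N * x m.+2
  <= cos (th R m) * \sum_(0 <= k < m.+3) x k ^+ 2.
Proof.
have H := @inv_id R m x m.+1 (ltnSn m.+1).
have hs : sin (th R m) != 0 by rewrite -sg1 gt_eqF // sg_gt0.
have e1 : sg R m m.+1 = 2 * cos (th R m) * sin (th R m).
  by rewrite -sgN1 -(sg_rec R m m.+1) sgN add0r.
rewrite sgN1 rhN1 e1 in H.
have pos : 0 <= \sum_(1 <= k < m.+2) TT R m x k.
  rewrite big_nat_cond; apply: sumr_ge0 => k /andP[/andP[k1 k2] _].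
  rewrite /TT divr_ge0 ?sqr_ge0 // mulr_ge0 ?mulr_ge0 ?ltW ?sg_gt0 //=.
  by rewrite k1 /= (ltn_trans k2).
rewrite !bl0 (bnr _ _ m.+1).
rewrite -subr_ge0; apply: (le_trans pos); rewrite H le_eqVlt; apply/orP; left; apply/eqP.
field; exact: hs.
Qed.
Lemma predE m (i j : nat) : (i < m.+3)%N -> (j < m.+3)%N ->
  ((i < j)%N && ((j == (i.+1 %% m.+3)%N) || (i == (j.+1 %% m.+3)%N))) =
  ((j == i.+1) || ((i == 0%N) && (j == m.+2))).
Proof.
move=> hi hj.
have [e|ne] := eqVneq i.+1 m.+3.
  have -> : (i < j)%N = false by apply/negbTE; rewrite -leqNgt; lia.
  apply/esym/negbTE/negP => /orP[/eqP|/andP[/eqP ? /eqP]]; lia.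
move/eqP: ne => ne.
have -> : (i.+1 %% m.+3)%N = i.+1 by rewrite modn_small //; lia.
have [e'|ne'] := eqVneq j.+1 m.+3.
  have -> : (j.+1 %% m.+3)%N = 0%N by rewrite e' modnn.
  apply/idP/idP; lia.
move/eqP: ne' => ne'.
have -> : (j.+1 %% m.+3)%N = j.+1 by rewrite modn_small //; lia.
apply/idP/idP; lia.
Qed.

Lemma sum_pred1 (R : realType) N (F : 'I_N.+1 -> R) (k : nat) : (k < N.+1)%N ->
  \sum_(j | val j == k) F j = F (inord k).
Proof.
move=> hk; rewrite (big_pred1 (inord k)) // => j /=.
by rewrite -(inj_eq val_inj) /= inordK.
Qed.

Lemma edge_cycle (R : realType) m (w f : 'I_(m.+3) -> 'I_(m.+3) -> R) :
  edge_sum (@cycle_graph m.+3) w f =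
  \sum_(0 <= i < m.+2) w (inord i) (inord i.+1) * f (inord i) (inord i.+1)
  + w ord0 ord_max * f ord0 ord_max.
Proof.
rewrite /edge_sum.
have ->: \sum_(i < m.+3) \sum_(j < m.+3 | (i < j)%N && @cycle_graph m.+3 i j) w i j * f i j
  = \sum_(i < m.+3) (\sum_(j | val j == i.+1) w i j * f i j
       + \sum_(j | (val i == 0%N) && (val j == m.+2)) w i j * f i j).
  apply: eq_bigr => i _.
  rewrite (bigID (fun j : 'I_(m.+3) => val j == i.+1)) /=.
  congr (_ + _); apply: eq_bigl => j; rewrite /cycle_graph predE ?ltn_ord //.
    by case: (val j == i.+1); rewrite ?orbT ?orbF ?andbF.
  case: eqP => [->|] /=; last by rewrite andbT.
  by case: eqP => [->|].
rewrite big_split /=; congr (_ + _).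
  rewrite big_ord_recr /= [X in _ + X]big_pred0; last first.
    by move=> j; rewrite ltn_eqF // ltn_ord.
  rewrite addr0 big_mkord; apply: eq_bigr => i _.
  rewrite sum_pred1 //; last by rewrite ltnS.
  have -> : widen_ord (leqnSn m.+2) i = inord i by apply: val_inj; rewrite /= inordK // ltnS ltnW.
  by [].
rewrite big_ord_recl [X in _ + X]big1 ?addr0; last first.
  by move=> i _; apply: big_pred0 => j.
rewrite sum_pred1 //.
by have -> : inord m.+2 = ord_max :> 'I_(m.+3) by apply: val_inj; rewrite /= inordK.
Qed.

Lemma sup_ge_mem (R : realType) (E : set R) x b :
  E x -> (forall y, E y -> y <= b) -> x <= sup E.
Proof.
move=> Ex hb; apply: ub_le_sup => //; by exists b => y /hb.
Qed.

Lemma sup_le_all (R : realType) (E : set R) x b :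
  E x -> (forall y, E y -> y <= b) -> sup E <= b.
Proof. by move=> Ex hb; apply: ge_sup; [exists x | move=> y /hb]. Qed.

Lemma cs_unit (R : realType) N (a b : 'I_N -> R) :
  \sum_k a k ^+ 2 = 1 -> \sum_k b k ^+ 2 = 1 -> `|\sum_k a k * b k| <= 1.
Proof.
move=> ha hb.
apply: (le_trans (ler_norm_sum _ _ _)).
have -> : (1 : R) = \sum_k (a k ^+ 2 + b k ^+ 2) / 2.
  by rewrite -mulr_suml big_split /= ha hb; field.
apply: ler_sum => k _; rewrite normrM.
have h1 := sqr_ge0 (`|a k| - `|b k|).
rewrite -(real_normK (num_real (a k))) -(real_normK (num_real (b k))).
lra.
Qed.

Definition Bw {R : realType} {N : nat} (G : rel 'I_N) (w : 'I_N -> 'I_N -> R) : R :=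
  \sum_(i < N) \sum_(j < N | (i < j)%N && G i j) `|w i j|.

Lemma edge_sum_bound (R : realType) N (G : rel 'I_N) (w f : 'I_N -> 'I_N -> R) :
  (forall i j, `|f i j| <= 1) -> edge_sum G w f <= Bw G w.
Proof.
move=> hf; rewrite /edge_sum /Bw; apply: ler_sum => i _; apply: ler_sum => j _.
apply: (le_trans (ler_norm _)); rewrite normrM.
by rewrite -[X in _ <= X]mulr1 ler_wpM2l.
Qed.

Lemma ip_ge (R : realType) N (G : rel 'I_N) (w : 'I_N -> 'I_N -> R) (x : 'I_N -> R) :
  (forall i, x i = 1 \/ x i = -1) -> edge_sum G w (fun i j => x i * x j) <= ip G w.
Proof.
move=> hx; apply: (@sup_ge_mem _ _ _ (Bw G w)); first by exists x.
move=> y [x' [hx' ->]]; apply: edge_sum_bound => i j.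
by rewrite normrM; case: (hx' i) => ->; case: (hx' j) => ->; rewrite ?normrN normr1 mulr1.
Qed.

Lemma ip_le (R : realType) N (G : rel 'I_N) (w : 'I_N -> 'I_N -> R) b :
  (forall x : 'I_N -> R, (forall i, x i = 1 \/ x i = -1) ->
     edge_sum G w (fun i j => x i * x j) <= b) -> ip G w <= b.
Proof.
move=> hb; apply: (@sup_le_all _ _ (edge_sum G w (fun i j => 1 * 1))).
  by exists (fun _ => 1); split => // i; left.
by move=> y [x [hx ->]]; apply: hb.
Qed.

Definition gram {R : realType} {N : nat} (u : 'I_N -> 'I_N -> R) i j : R :=
  \sum_(k < N) u i k * u j k.

Lemma sdp_ge (R : realType) N (G : rel 'I_N) (w : 'I_N -> 'I_N -> R) (u : 'I_N -> 'I_N -> R) :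
  (forall i, \sum_(k < N) u i k ^+ 2 = 1) -> edge_sum G w (gram u) <= sdp G w.
Proof.
move=> hu; apply: (@sup_ge_mem _ _ _ (Bw G w)); first by exists u.
move=> y [u' [hu' ->]]; apply: edge_sum_bound => i j; exact: cs_unit.
Qed.

Lemma sdp_le (R : realType) m (G : rel 'I_m.+1) (w : 'I_m.+1 -> 'I_m.+1 -> R) b :
  (forall u : 'I_m.+1 -> 'I_m.+1 -> R, (forall i, \sum_(k < m.+1) u i k ^+ 2 = 1) ->
     edge_sum G w (gram u) <= b) -> sdp G w <= b.
Proof.
move=> hb.
pose u0 : 'I_m.+1 -> 'I_m.+1 -> R := fun i k => if k == ord0 then 1 else 0.
have hu0 : forall i, \sum_(k < m.+1) u0 i k ^+ 2 = 1.
  move=> i; rewrite big_ord_recl /u0 /= big1 ?addr0 ?expr1n // => k _.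
  by rewrite expr0n.
apply: (@sup_le_all _ _ (edge_sum G w (gram u0))); first by exists u0.
by move=> y [u [hu ->]]; apply: hb.
Qed.

Lemma inord0E m : inord 0 = ord0 :> 'I_(m.+3).
Proof. by apply: val_inj; rewrite /= inordK. Qed.

Lemma inordmaxE m : inord m.+2 = ord_max :> 'I_(m.+3).
Proof. by apply: val_inj; rewrite /= inordK. Qed.

Lemma vec_ineq (R : realType) m (V : nat -> 'I_(m.+3) -> R) :
  (forall i, (i < m.+3)%N -> \sum_k V i k ^+ 2 = 1) ->
  \sum_(0 <= i < m.+2) (\sum_k V i k * V i.+1 k) - \sum_k V 0%N k * V m.+2 k
  <= (m.+3)%:R * cos (th R m).
Proof.
move=> hV.
have H : \sum_k (\sum_(0 <= i < m.+2) V i k * V i.+1 k - V 0%N k * V m.+2 k)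
   <= \sum_k (cos (th R m) * \sum_(0 <= i < m.+3) V i k ^+ 2).
  by apply: ler_sum => k _; exact: (scalar_ineq R m (fun i => V i k)).
rewrite sumrB -mulr_sumr in H.
have e1 : \sum_(j < m.+3) \sum_(0 <= i < m.+2) V i j * V i.+1 j
  = \sum_(0 <= i < m.+2) \sum_(j < m.+3) V i j * V i.+1 j by apply: exchange_big.
have e2 : \sum_(j < m.+3) \sum_(0 <= i < m.+3) V i j ^+ 2 = (m.+3)%:R.
  rewrite exchange_big /= -[X in _ = X%:R](subn0 m.+3) -sumr_const_nat.
  by apply: eq_big_nat => i /andP[_ hi]; rewrite hV.
rewrite e1 e2 in H; by rewrite mulrC.
Qed.

Lemma cyc_nat (R : realType) m (w : 'I_(m.+3) -> 'I_(m.+3) -> R) (X : nat -> R) :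
  edge_sum (@cycle_graph m.+3) w (fun i j => X (val i) * X (val j)) =
  \sum_(0 <= i < m.+2) w (inord i) (inord i.+1) * (X i * X i.+1)
  + w ord0 ord_max * (X 0%N * X m.+2).
Proof.
rewrite edge_cycle; congr (_ + _).
by apply: eq_big_nat => i /andP[_ hi]; rewrite /= !inordK // ltnS // ltnW.
Qed.

Definition sgnr' {R : realType} (t : R) : R := if 0 <= t then 1 else -1.

Fixpoint sig {R : realType} (a : nat -> R) (i : nat) : R :=
  if i is i'.+1 then sig a i' * sgnr' (a i') else 1.

Lemma sgnr'_pm {R : realType} (t : R) : sgnr' t = 1 \/ sgnr' t = -1.
Proof. by rewrite /sgnr'; case: ifP; [left|right]. Qed.

Lemma sgnr'_abs {R : realType} (t : R) : sgnr' t * t = `|t|.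
Proof.
rewrite /sgnr'; case: ifP => h; first by rewrite mul1r ger0_norm.
by rewrite ltr0_norm ?mulN1r // ltNge h.
Qed.

Lemma sig_pm {R : realType} (a : nat -> R) i : sig a i = 1 \/ sig a i = -1.
Proof.
elim: i => [|i IH] /=; first by left.
by case: IH => ->; case: (sgnr'_pm (a i)) => ->; rewrite ?mulr1 ?mulrN1 ?opprK; auto.
Qed.

Lemma pm_sq {R : realType} {x : R} : x = 1 \/ x = -1 -> x * x = 1.
Proof. by case=> ->; rewrite ?mulr1 ?mulrNN ?mulr1. Qed.

Lemma sig_abs {R : realType} (a : nat -> R) i : sig a i * sig a i.+1 * a i = `|a i|.
Proof.
rewrite /= -sgnr'_abs mulrA (pm_sq (sig_pm a i)) mul1r //.
Qed.

Lemma argmin_nat {R : realType} (g : nat -> R) M :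
  exists f, (f <= M)%N /\ forall e, (e <= M)%N -> g f <= g e.
Proof.
elim: M => [|M [f [hf H]]].
  by exists 0%N; split => // e; rewrite leqn0 => /eqP ->.
have [le|lt] := leP (g f) (g M.+1).
  exists f; split; first by apply: leq_trans hf _.
  move=> e; rewrite leq_eqVlt ltnS => /orP[/eqP ->|he] //; exact: H.
exists M.+1; split => // e; rewrite leq_eqVlt ltnS => /orP[/eqP ->|he] //.
by apply: (le_trans (ltW lt)); exact: H.
Qed.

Lemma sum_ifeq {R : realType} (F : nat -> R) M f : (f < M)%N ->
  \sum_(0 <= i < M) (if i == f then F i else 0) = F f.
Proof.
elim: M => // M IH hf; rewrite big_nat_recr //=.
case: (eqVneq M f) => [<-|ne].
  rewrite ?eqxx big1_seq ?add0r // => i; rewrite mem_index_iota => /andP[_ hi].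
  by rewrite (ltn_eqF hi).
rewrite IH ?addr0 ?(negbTE ne) //.
by move: hf; rewrite ltnS leq_eqVlt eq_sym (negbTE ne).
Qed.

Definition Kc (R : realType) m : R := (m.+3)%:R / ((m.+3)%:R - 2) * cos (th R m).

Lemma Kc_eq (R : realType) m : Kc R m * (m.+1)%:R = (m.+3)%:R * cos (th R m).
Proof.
rewrite /Kc.
have -> : (m.+3)%:R - 2 = (m.+1)%:R :> R by rewrite -[m.+3]addn2 natrD addrK.
field; by rewrite addrC natr1 pnatr_eq0.
Qed.

Lemma Kc_ge1 (R : realType) m : 1 <= Kc R m.
Proof.
have H := scalar_ineq R m (fun _ => 1).
have e1 : \sum_(0 <= k < m.+2) ((1 : R) * 1) = (m.+2)%:R.
  by rewrite sumr_const_nat subn0 mulr1.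
have e2 : \sum_(0 <= k < m.+3) ((1 : R) ^+ 2) = (m.+3)%:R.
  by rewrite sumr_const_nat subn0 expr1n.
rewrite e1 e2 mulr1 in H.
have hm : (0 : R) < (m.+1)%:R by rewrite ltr0n.
rewrite -(ler_pM2r hm) mul1r Kc_eq mulrC.
apply: le_trans H.
by rewrite -[m.+2]addn1 natrD addrK.
Qed.

Arguments cs_unit {R N a b}.
Arguments vec_ineq {R m} V.

Lemma eps_prod {R : realType} (i f : nat) :
  ((if (i <= f)%N then 1 else -1) * (if (i.+1 <= f)%N then 1 else -1) : R)
  = if i == f then -1 else 1.
Proof.
case: (ltngtP i f) => h.
- by rewrite mulr1.
- by rewrite mulrNN mulr1.
- by rewrite mul1r.
Qed.

Lemma UB (R : realType) m (w u : 'I_(m.+3) -> 'I_(m.+3) -> R) :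
  (forall i, \sum_k u i k ^+ 2 = 1) ->
  edge_sum (@cycle_graph m.+3) w (gram u) <= Kc R m * ip (@cycle_graph m.+3) w.
Proof.
move=> hu.
set a := fun i => w (inord i) (inord i.+1).
set aw := w ord0 ord_max.
set s := sig a.
have s2 : forall i, s i * s i = 1 by move=> i; apply: pm_sq; apply: sig_pm.
set t := s 0%N * s m.+2 * aw.
pose V := fun i k => s i * u (inord i) k.
have hV : forall i, \sum_k V i k ^+ 2 = 1.
  move=> i; rewrite -(hu (inord i)); apply: eq_bigr => k _.
  by rewrite /V exprMn expr2 s2 mul1r.
pose g := fun i => \sum_k V i k * V i.+1 k.
pose gw := \sum_k V 0%N k * V m.+2 k.
have hY : edge_sum (@cycle_graph m.+3) w (gram u)
          = \sum_(0 <= i < m.+2) `|a i| * g i + t * gw.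
  rewrite edge_cycle; congr (_ + _).
    apply: eq_bigr => i _; rewrite -sig_abs /g /V /gram !mulr_sumr.
    apply: eq_bigr => k _.
    have E : forall x y : R, s i * s i.+1 * a i * ((s i * x) * (s i.+1 * y))
        = (s i * s i) * (s i.+1 * s i.+1) * (a i * (x * y)) by move=> x y; ring.
    by rewrite E !s2 !mul1r.
  rewrite /t /gw /V /gram !mulr_sumr inord0E inordmaxE; apply: eq_bigr => k _.
  have E : forall x y : R, s 0%N * s m.+2 * aw * ((s 0%N * x) * (s m.+2 * y))
        = (s 0%N * s 0%N) * (s m.+2 * s m.+2) * (aw * (x * y)) by move=> x y; ring.
  by rewrite E !s2 !mul1r.
have hg : forall i, g i <= 1.
  by move=> i; apply: le_trans (ler_norm _) (cs_unit (hV i) (hV i.+1)).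
have hgw : `|gw| <= 1 by apply: cs_unit.
have hvec : \sum_(0 <= i < m.+2) g i - gw <= (m.+3)%:R * cos (th R m).
  exact: (vec_ineq V).
have ipX : forall X : nat -> R, (forall i, X i = 1 \/ X i = -1) ->
    \sum_(0 <= i < m.+2) a i * (X i * X i.+1) + aw * (X 0%N * X m.+2)
    <= ip (@cycle_graph m.+3) w.
  by move=> X hX; rewrite -cyc_nat; apply: ip_ge => i; exact: hX.
have ht : `|t| = `|aw|.
  have h0 : s 0%N = 1 \/ s 0%N = -1 := sig_pm a 0.
  have h2 : s m.+2 = 1 \/ s m.+2 = -1 := sig_pm a m.+2.
  by rewrite /t; case: h0 => ->; case: h2 => ->; rewrite ?mulN1r ?opprK ?mul1r ?mulN1r ?normrN.
have K1 := Kc_ge1 R m.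
set W := \sum_(0 <= i < m.+2) `|a i| + `|aw|.
have W0 : 0 <= W by rewrite addr_ge0 // sumr_ge0.
have [t0|t0] := leP 0 t.
  have tE : t = `|aw| by rewrite -ht ger0_norm.
  have hip : W <= ip (@cycle_graph m.+3) w.
    apply: le_trans (ipX s (sig_pm a)); rewrite /W -tE.
    rewrite le_eqVlt; apply/orP; left; apply/eqP; congr (_ + _).
      by apply: eq_bigr => i _; rewrite -sig_abs -/s; ring.
    by rewrite /t; ring.
  rewrite hY; apply: (le_trans _ (ler_peMl (le_trans W0 hip) K1)).
  apply: le_trans _ hip; apply: lerD.
    by apply: ler_sum => i _; apply: ler_piMr.
  by rewrite tE ler_piMr // (le_trans (ler_norm _) hgw).
have tE : t = - `|aw| by rewrite -ht ltr0_norm ?opprK.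
pose A := fun e => if (e < m.+2)%N then `|a e| else `|aw|.
have [f [hf hA]] := argmin_nat A m.+2.
set mu := A f.
have mua : forall i, (i < m.+2)%N -> mu <= `|a i|.
  by move=> i hi; have := hA i (ltnW hi); rewrite /A hi.
have muw : mu <= `|aw| by have := hA m.+2 (leqnn _); rewrite /A ltnn.
have mu0 : 0 <= mu by rewrite /mu /A; case: ifP.
pose eps := fun i : nat => (if (i <= f)%N then 1 else -1 : R).
have hip : W - 2 * mu <= ip (@cycle_graph m.+3) w.
  have hX : forall i, s i * eps i = 1 \/ s i * eps i = -1.
    move=> i; have hs : s i = 1 \/ s i = -1 := sig_pm a i.
    rewrite /eps; case: hs => ->; case: ifP => _;
    rewrite ?mulr1 ?mulrN1 ?opprK; auto.
  apply: le_trans (ipX _ hX).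
  have E1 : forall i, a i * (s i * eps i * (s i.+1 * eps i.+1))
      = `|a i| - 2 * (if i == f then `|a i| else 0).
    move=> i; rewrite -sig_abs -/s.
    have -> : a i * (s i * eps i * (s i.+1 * eps i.+1))
       = s i * s i.+1 * a i * (eps i * eps i.+1) by ring.
    by rewrite /eps eps_prod; case: (i == f); ring.
  under eq_bigr => i _ do rewrite E1.
  rewrite sumrB -mulr_sumr.
  have E2 : aw * (s 0%N * eps 0%N * (s m.+2 * eps m.+2)) = t * eps m.+2.
    by rewrite /eps leq0n /t; ring.
  rewrite E2 tE /eps /W /mu /A.
  move: hf; rewrite leq_eqVlt => /orP[/eqP ->|hf].
    have Z : \sum_(0 <= i < m.+2) (if i == m.+2 then `|a i| else 0) = 0.
      apply: big1_seq => i; rewrite mem_index_iota => /andP[_ hi].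
      by rewrite (ltn_eqF hi).
    rewrite leqnn ltnn Z.
    by rewrite le_eqVlt; apply/orP; left; apply/eqP; ring.
  rewrite hf sum_ifeq // leqNgt hf /=.
  by rewrite le_eqVlt; apply/orP; left; apply/eqP; ring.
have hY2 : edge_sum (@cycle_graph m.+3) w (gram u)
    <= W - (m.+3)%:R * mu + mu * ((m.+3)%:R * cos (th R m)).
  rewrite hY tE.
  have S1 : \sum_(0 <= i < m.+2) `|a i| * g i
      <= \sum_(0 <= i < m.+2) (`|a i| - mu) + mu * \sum_(0 <= i < m.+2) g i.
    rewrite mulr_sumr -big_split /=; apply: ler_sum_nat => i /andP[_ hi].
    have : 0 <= (`|a i| - mu) * (1 - g i) by rewrite mulr_ge0 // subr_ge0 ?mua ?hg.
    lra.
  have S2 : - `|aw| * gw <= `|aw| - mu - mu * gw.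
    move: (hgw); rewrite ler_norml => /andP[g1 g2].
    have : 0 <= (`|aw| - mu) * (1 + gw) by rewrite mulr_ge0 // ?subr_ge0 // -lerBlDl sub0r.
    lra.
  have S3 : \sum_(0 <= i < m.+2) (`|a i| - mu)
       = \sum_(0 <= i < m.+2) `|a i| - (m.+2)%:R * mu.
    by rewrite sumrB sumr_const_nat subn0 mulr_natl.
  have H3 : mu * (\sum_(0 <= i < m.+2) g i - gw) <= mu * ((m.+3)%:R * cos (th R m)).
    by rewrite ler_wpM2l.
  rewrite S3 in S1.
  have eN : (m.+3)%:R = (m.+2)%:R + 1 :> R by rewrite -[m.+3]addn1 natrD.
  rewrite /W eN; lra.
have WN : (m.+3)%:R * mu <= W.
  rewrite /W.
  have : \sum_(0 <= i < m.+2) mu <= \sum_(0 <= i < m.+2) `|a i|.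
    by apply: ler_sum_nat => i /andP[_ hi]; apply: mua.
  rewrite sumr_const_nat subn0 -mulr_natl.
  have eN : (m.+3)%:R = (m.+2)%:R + 1 :> R by rewrite -[m.+3]addn1 natrD.
  rewrite eN; lra.
have KE := Kc_eq R m.
have h1 : 0 <= (Kc R m - 1) * (W - (m.+3)%:R * mu).
  by rewrite mulr_ge0 // subr_ge0.
have eN : (m.+3)%:R = (m.+1)%:R + 2 :> R by rewrite -[m.+3]addn2 natrD.
have hk : mu * (Kc R m * (m.+1)%:R) = mu * ((m.+3)%:R * cos (th R m)) by rewrite KE.
have h2 : W - (m.+3)%:R * mu + mu * ((m.+3)%:R * cos (th R m))
    <= Kc R m * (W - 2 * mu).
  rewrite eN in h1 hk *. nra.
apply: (le_trans hY2); apply: (le_trans h2).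
by rewrite ler_wpM2l // (le_trans _ K1).
Qed.

Definition w0 {R : realType} (m : nat) : 'I_(m.+3) -> 'I_(m.+3) -> R :=
  fun i j => if (val i == 0%N) && (val j == m.+2) then -1 else 1.

Lemma w0a (R : realType) m i : (i < m.+2)%N -> @w0 R m (inord i) (inord i.+1) = 1.
Proof.
move=> hi; rewrite /w0 /= !inordK ?ltnS // ?(ltnW hi) //.
by case: eqP => [->|] //=.
Qed.

Lemma w0w (R : realType) m : @w0 R m ord0 ord_max = -1.
Proof. by rewrite /w0 /= !eqxx. Qed.

Lemma w0_sum (R : realType) m (F : nat -> R) :
  \sum_(0 <= i < m.+2) @w0 R m (inord i) (inord i.+1) * F i = \sum_(0 <= i < m.+2) F i.
Proof. by apply: eq_big_nat => i /andP[_ hi]; rewrite w0a // mul1r. Qed.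

Lemma telesc {R : realType} (X : nat -> R) :
  (forall i, X i = 1 \/ X i = -1) ->
  forall M, 1 - X 0%N * X M <= \sum_(0 <= i < M) (1 - X i * X i.+1).
Proof.
move=> hX; elim=> [|M IH].
  by rewrite big_geq // (pm_sq (hX 0%N)) subrr.
rewrite big_nat_recr //=.
have : 0 <= (1 - X 0%N * X M) * (1 - X M * X M.+1).
  by case: (hX 0%N) => ->; case: (hX M) => ->; case: (hX M.+1) => ->; rewrite ?mulr1 ?mulrN1 ?mul1r ?mulN1r ?opprK; lra.
have h := pm_sq (hX M).
have E : (1 - X 0%N * X M) * (1 - X M * X M.+1)
   = 1 - X 0%N * X M - X M * X M.+1 + X 0%N * X M.+1 * (X M * X M) by ring.
rewrite E h mulr1 => H.
lra.
Qed.

Lemma ip_w0 (R : realType) m : ip (@cycle_graph m.+3) (@w0 R m) = (m.+1)%:R.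
Proof.
apply/eqP; rewrite eq_le; apply/andP; split.
  apply: ip_le => x hx.
  pose X := fun n => x (inord n).
  have hX : forall n, X n = 1 \/ X n = -1 by move=> n; exact: hx.
  have -> : (fun i j => x i * x j) = (fun i j : 'I_(m.+3) => X (val i) * X (val j)).
    by apply/funext => i; apply/funext => j; rewrite /X !inord_val.
  rewrite cyc_nat w0_sum w0w.
  have T := telesc _ hX m.+2.
  rewrite sumrB sumr_const_nat subn0 in T.
  have eN : (m.+2)%:R = (m.+1)%:R + 1 :> R by rewrite -[m.+2]addn1 natrD.
  rewrite -mulr_natl mulr1 eN in T.
  lra.
have := @ip_ge R m.+3 (@cycle_graph m.+3) (@w0 R m) (fun _ => 1) (fun i => or_introl erefl).
rewrite (cyc_nat _ _ _ (fun _ => 1)) w0_sum w0w sumr_const_nat subn0.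
have eN : (m.+2)%:R = (m.+1)%:R + 1 :> R by rewrite -[m.+2]addn1 natrD.
rewrite !mulr1 -mulr_natl mulr1 eN; lra.
Qed.

Lemma sum2 {R : realType} {m} (F : 'I_(m.+3) -> R) :
  (forall k : 'I_(m.+3), (2 <= val k)%N -> F k = 0) ->
  \sum_k F k = F ord0 + F (inord 1).
Proof.
move=> hF; rewrite big_ord_recl big_ord_recl big1 ?addr0.
  by congr (_ + F _); apply: val_inj; rewrite /= inordK.
by move=> k _; apply: hF.
Qed.

Definition uu {R : realType} {m : nat} (i k : 'I_(m.+3)) : R :=
  if val k == 0%N then rh R m (val i) else if val k == 1%N then sg R m (val i) else 0.

Lemma gram_uu (R : realType) m (i j : 'I_(m.+3)) :
  gram (@uu R m) i j = cos ((val j)%:R * th R m - (val i)%:R * th R m).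
Proof.
rewrite /gram (sum2 (fun k => uu i k * uu j k)).
  by rewrite /uu /= inordK // cosB /rh /sg /=; ring.
by move=> k hk; rewrite /uu; case: eqP => [h|_]; [rewrite h in hk|case: eqP => [h|_]; [rewrite h in hk|rewrite mul0r]].
Qed.

Lemma uu_unit (R : realType) m i : \sum_k (@uu R m i k) ^+ 2 = 1.
Proof.
rewrite (sum2 (fun k => uu i k ^+ 2)).
  by rewrite /uu /= inordK // /rh /sg cos2Dsin2.
by move=> k hk; rewrite /uu; case: eqP => [h|_]; [rewrite h in hk|case: eqP => [h|_]; [rewrite h in hk|rewrite expr0n]].
Qed.

Lemma sdp_w0 (R : realType) m :
  sdp (@cycle_graph m.+3) (@w0 R m) = (m.+3)%:R * cos (th R m).
Proof.
apply/eqP; rewrite eq_le; apply/andP; split.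
  apply: sdp_le => u hu.
  rewrite edge_cycle w0_sum w0w mulN1r -(inord0E m) -(inordmaxE m).
  pose V := fun i k => u (inord i) k.
  have := vec_ineq V (fun i _ => hu (inord i)).
  by rewrite /V /gram.
have := @sdp_ge R m.+3 (@cycle_graph m.+3) (@w0 R m) _ (@uu_unit R m).
rewrite edge_cycle w0_sum w0w mulN1r gram_uu.
have -> : \sum_(0 <= i < m.+2) gram (@uu R m) (inord i) (inord i.+1)
   = \sum_(0 <= i < m.+2) cos (th R m).
  apply: eq_big_nat => i /andP[_ hi]; rewrite gram_uu /= !inordK ?ltnS ?(ltnW hi) //.
  by rewrite thS addrAC subrr add0r.
rewrite sumr_const_nat subn0 /= mul0r subr0.
have -> : cos ((m.+2)%:R * th R m) = rh R m m.+2 by [].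
rewrite rhN1 opprK => H; apply: le_trans H.
have eN : (m.+3)%:R = (m.+2)%:R + 1 :> R by rewrite -[m.+3]addn1 natrD.
by rewrite eN mulrDl mul1r mulr_natl.
Qed.

Lemma ratio_le (R : realType) m (w : 'I_(m.+3) -> 'I_(m.+3) -> R) :
  0 < ip (@cycle_graph m.+3) w ->
  sdp (@cycle_graph m.+3) w / ip (@cycle_graph m.+3) w <= Kc R m.
Proof.
move=> hw; rewrite ler_pdivrMr //.
by apply: sdp_le => u hu; exact: UB.
Qed.

Lemma Kc_mem (R : realType) m :
  0 < ip (@cycle_graph m.+3) (@w0 R m) /\
  Kc R m = sdp (@cycle_graph m.+3) (@w0 R m) / ip (@cycle_graph m.+3) (@w0 R m).
Proof.
rewrite ip_w0 sdp_w0; split; first by rewrite ltr0n.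
rewrite -Kc_eq mulfK //; by rewrite pnatr_eq0.
Qed.

Theorem mainTheorem6 (R : realType) (n : nat) (hn : (3 <= n)%N) :
  @grothendieck_const R n (@cycle_graph n) =
    (n%:R / (n%:R - 2)) * cos (pi / n%:R) :> R.
Proof.
case: n hn => [|[|[|m]]] // _.
change ((m.+3)%:R / ((m.+3)%:R - 2) * cos (pi / (m.+3)%:R)) with (Kc R m).
rewrite /grothendieck_const.
have hub : forall y, [set r | exists w : 'I_(m.+3) -> 'I_(m.+3) -> R,
    0 < ip (@cycle_graph m.+3) w /\
    r = sdp (@cycle_graph m.+3) w / ip (@cycle_graph m.+3) w]%classic y -> y <= Kc R m.
  by move=> y [w [hw ->]]; apply: ratio_le.
have hmem : [set r | exists w : 'I_(m.+3) -> 'I_(m.+3) -> R,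
    0 < ip (@cycle_graph m.+3) w /\
    r = sdp (@cycle_graph m.+3) w / ip (@cycle_graph m.+3) w]%classic (Kc R m).
  by exists (@w0 R m); exact: Kc_mem.
apply/eqP; rewrite eq_le; apply/andP; split.
  exact: (@sup_le_all _ _ _ _ hmem hub).
exact: (@sup_ge_mem _ _ _ _ hmem hub).
Qed.
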